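(* Let $G$ be a flat affine group scheme over $R$ and $N\to G$ the automatic blowup of the identity. Then for every $n\ge0$ the group scheme $N\otimes_RR_n$ over $R_n$ is trivial, i.e. isomorphic to $\mathrm{Spec}\,R_n$. Conversely, if $\rho:\mathcal G\to G$ is a morphism of flat affine group schemes over $R$ inducing an isomorphism on generic fibres and such that $\mathcal G\otimes_RR_n$ is trivial for all $n\ge0$, then $R[\mathcal G]=R[N]$ as subrings of $K[G]$, i.e. $\rho$ is the automatic blowup of the identity.
   Context: $R$ is a discrete valuation ring with uniformizer $\pi$, fraction field $K$, residue field $k$; $R_n=R/(\pi^{n+1})$; $R[G]\subset K[G]$ for flat $G$. The Neron blowup of a flat affine group scheme $H$ at a closed subgroup of $H\otimes k$ with ideal $J\subset R[H]$ (inverse image of its ideal) is $\mathrm{Spec}$ of the subring of $K[H]$ generated by $R[H]$ and $\pi^{-1}J$. The automatic blowup of the identity $N\to G$ is the limit of $\cdots\to G_{n+1}\to G_n\to\cdots\to G_0=G$, where $G_{n+1}\to G_n$ is the Neron blowup of $G_n$ at $\{e\}\subset G_n\otimes k$. *)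

(* Defs.v *)
From HB Require Import structures.
From mathcomp Require Import all_boot all_order all_algebra.
Set Implicit Arguments. Unset Strict Implicit. Unset Printing Implicit Defensive.
Import GRing.Theory.
Local Open Scope ring_scope.

Notation "x %:F" := (@FracField.tofrac _ x).

(* Discrete valuation rings: a domain R with a uniformizer pi, i.e. pi is a  *)
(* nonzero non-unit and every nonzero x is u * pi^n with u a unit.           *)
Definition is_uniformizer (R : idomainType) (pi : R) : Prop :=
  [/\ pi != 0, pi \isn't a GRing.unit &
      forall x : R, x != 0 -> exists (u : R) (n : nat),
          u \is a GRing.unit /\ x = u * pi ^+ n].

Section Schemes.
Variable R : idomainType.
Local Notation K := {fraction R}.

Definition alg_hom (A B : comAlgType K) (f : A -> B) : Prop :=
  [/\ forall (k : K) (x y : A), f (k *: x + y) = k *: f x + f y,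
      f 1 = 1 & forall x y : A, f (x * y) = f x * f y].

Definition alg_hom_K (A : comAlgType K) (e : A -> K) : Prop :=
  [/\ forall (k : K) (x y : A), e (k *: x + y) = k * e x + e y,
      e 1 = 1 & forall x y : A, e (x * y) = e x * e y].

(* A2 with p1, p2 is A (x)_K A: the coproduct of two copies of A in the     *)
(* category of commutative K-algebras.                                      *)
Definition is_tensor2 (A A2 : comAlgType K) (p1 p2 : A -> A2) : Prop :=
  [/\ alg_hom p1, alg_hom p2 &
      forall (B : comAlgType K) (f g : A -> B), alg_hom f -> alg_hom g ->
        (exists h : A2 -> B, [/\ alg_hom h, forall a, h (p1 a) = f a
                                          & forall a, h (p2 a) = g a]) /\
        (forall h h' : A2 -> B, alg_hom h -> alg_hom h' ->
           (forall a, h (p1 a) = f a) -> (forall a, h (p2 a) = g a) ->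
           (forall a, h' (p1 a) = f a) -> (forall a, h' (p2 a) = g a) ->
           forall x, h x = h' x)].

(* A3 with q1, q2, q3 is A (x)_K A (x)_K A. *)
Definition is_tensor3 (A A3 : comAlgType K) (q1 q2 q3 : A -> A3) : Prop :=
  [/\ alg_hom q1, alg_hom q2, alg_hom q3 &
      forall (B : comAlgType K) (f g k : A -> B),
        alg_hom f -> alg_hom g -> alg_hom k ->
        (exists h : A3 -> B, [/\ alg_hom h, forall a, h (q1 a) = f a,
                     forall a, h (q2 a) = g a & forall a, h (q3 a) = k a]) /\
        (forall h h' : A3 -> B, alg_hom h -> alg_hom h' ->
           (forall a, h (q1 a) = f a) -> (forall a, h (q2 a) = g a) ->
           (forall a, h (q3 a) = k a) ->
           (forall a, h' (q1 a) = f a) -> (forall a, h' (q2 a) = g a) ->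
           (forall a, h' (q3 a) = k a) ->
           forall x, h x = h' x)].

(* Commutative Hopf algebra axioms for (A, comultiplication D, counit e,    *)
(* antipode s); maps out of A (x) A are described by their values on        *)
(* p1 a = a (x) 1 and p2 a = 1 (x) a.                                        *)
Definition is_hopf (A A2 A3 : comAlgType K) (p1 p2 : A -> A2)
    (q1 q2 q3 : A -> A3) (D : A -> A2) (e : A -> K) (s : A -> A) : Prop :=
  [/\ alg_hom D /\ alg_hom_K e, alg_hom s,
      (* coassociativity: (D (x) id) o D = (id (x) D) o D *)
      (forall (u v L M : A2 -> A3),
         alg_hom u -> alg_hom v -> alg_hom L -> alg_hom M ->
         (forall a, u (p1 a) = q1 a) -> (forall a, u (p2 a) = q2 a) ->
         (forall a, v (p1 a) = q2 a) -> (forall a, v (p2 a) = q3 a) ->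
         (forall a, L (p1 a) = u (D a)) -> (forall a, L (p2 a) = q3 a) ->
         (forall a, M (p1 a) = q1 a) -> (forall a, M (p2 a) = v (D a)) ->
         forall a, L (D a) = M (D a)),
      (* counit: (e (x) id) o D = id = (id (x) e) o D *)
      (forall h : A2 -> A, alg_hom h ->
         (forall a, h (p1 a) = (e a)%:A) -> (forall a, h (p2 a) = a) ->
         forall a, h (D a) = a) /\
      (forall h : A2 -> A, alg_hom h ->
         (forall a, h (p1 a) = a) -> (forall a, h (p2 a) = (e a)%:A) ->
         forall a, h (D a) = a) &
      (* antipode: m o (s (x) id) o D = unit o e = m o (id (x) s) o D *)
      (forall h : A2 -> A, alg_hom h ->
         (forall a, h (p1 a) = s a) -> (forall a, h (p2 a) = a) ->
         forall a, h (D a) = (e a)%:A) /\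
      (forall h : A2 -> A, alg_hom h ->
         (forall a, h (p1 a) = a) -> (forall a, h (p2 a) = s a) ->
         forall a, h (D a) = (e a)%:A)].

Definition Rsubalg (A : comAlgType K) (P : A -> Prop) : Prop :=
  [/\ forall r : R, P ((r%:F)%:A),
      forall x y, P x -> P y -> P (x + y)
    & forall x y, P x -> P y -> P (x * y)].

Definition Rgen (A : comAlgType K) (X : A -> Prop) : A -> Prop :=
  fun a => forall P : A -> Prop, Rsubalg P -> (forall x, X x -> P x) -> P a.

(* S is (the coordinate ring R[G] of) a flat affine group scheme over R,     *)
(* realised inside its generic fibre K[G] = A (flat = torsion free, so      *)
(* R[G] embeds in R[G] (x)_R K = A):                                         *)
(*  - S is an R-subalgebra of A with S (x)_R K = A (S spans A over K);      *)
(*  - D(S) lies in the image of S (x)_R S in A (x)_K A, i.e. the R-subalgebra *)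
(*    generated by the a (x) 1, 1 (x) a (a in S);                             *)
Definition flat_group_scheme (A A2 : comAlgType K) (p1 p2 : A -> A2)
    (D : A -> A2) (e : A -> K) (s : A -> A) (S : A -> Prop) : Prop :=
  [/\ Rsubalg S,
      forall a : A, exists r : R, r != 0 /\ S (r%:F *: a),
      forall a, S a -> Rgen (fun x => exists2 b, S b & x = p1 b \/ x = p2 b) (D a),
      forall a, S a -> exists r : R, e a = r%:F
    & forall a, S a -> S (s a)].

(* Neron blowup of S at the identity section {e} of the special fibre:       *)
(* J = inverse image in S of the ideal of {e} in S/pi S = {x in S | e x in pi R},*)
(* and the blowup is the subring of A generated by S and pi^-1 J.            *)
Definition neron_blowup_e (A : comAlgType K) (pi : R) (e : A -> K)
    (S : A -> Prop) : A -> Prop :=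
  Rgen (fun a => S a \/
         exists2 j, S j & (exists r : R, e j = (pi * r)%:F) /\ a = (pi%:F)^-1 *: j).

(* The automatic blowup N: the limit of G_{n+1} -> G_n, i.e. R[N] is the   *)
(* union (colimit) of the increasing chain of subrings R[G_n] of A.         *)
Definition auto_blowup (A : comAlgType K) (pi : R) (e : A -> K)
    (S : A -> Prop) : A -> Prop :=
  fun a => exists n : nat, iter n (neron_blowup_e pi e) S a.

Definition in_pi_pow (A : comAlgType K) (pi : R) (n : nat) (S : A -> Prop)
    (x : A) : Prop :=
  exists2 s, S s & x = ((pi ^+ n.+1)%:F) *: s.

(* The group scheme Spec (S (x)_R R_n) = Spec (S / pi^(n+1) S) over R_n is   *)
(* trivial: the structure map R_n = R/(pi^(n+1)) -> S/pi^(n+1) S is an       *)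
(* isomorphism (surjective and injective).                                   *)
Definition trivial_mod (A : comAlgType K) (pi : R) (S : A -> Prop) (n : nat)
    : Prop :=
  (forall a, S a -> exists r : R, in_pi_pow pi n S (a - (r%:F)%:A)) /\
  (forall r : R, in_pi_pow pi n S ((r%:F)%:A) ->
     exists q : R, r = q * pi ^+ n.+1).

End Schemes.

(* Main.v *)
Require Import Defs.
From HB Require Import structures.
From mathcomp Require Import all_boot all_order all_algebra.
Import GRing.Theory.
Local Open Scope ring_scope.
Set Implicit Arguments.

Lemma eK_lin (R : idomainType) (A : comAlgType {fraction R}) (e : A -> {fraction R}) :
  alg_hom_K e ->
  [/\ e 0 = 0, forall x y, e (x + y) = e x + e y, forall k x, e (k *: x) = k * e x,
      forall k, e (k%:A) = k & forall x y, e (x - y) = e x - e y].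
Proof.
case=> Hl H1 HM.
have e0 : e 0 = 0.
  have := Hl 1 0 0; rewrite scaler0 addr0 mul1r => H.
  by apply: (@addrI _ (e 0)); rewrite addr0 -H.
have eD : forall x y, e (x + y) = e x + e y.
  by move=> x y; rewrite -(scale1r x) Hl mul1r scale1r.
have eZ : forall k x, e (k *: x) = k * e x.
  by move=> k x; rewrite -[k *: x]addr0 Hl e0 addr0.
split => //.
- by move=> k; rewrite eZ H1 mulr1.
- move=> x y; rewrite addrC -scaleN1r Hl; by rewrite mulN1r addrC.
Qed.

Lemma Rsub_Z (R : idomainType) (A : comAlgType {fraction R}) (P : A -> Prop) r x :
  Rsubalg P -> P x -> P (r%:F *: x).
Proof. by case=> Hc _ HM Px; rewrite -mulr_algl; apply: HM. Qed.

Lemma Rsub_B (R : idomainType) (A : comAlgType {fraction R}) (P : A -> Prop) x y :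
  Rsubalg P -> P x -> P y -> P (x - y).
Proof.
move=> HP Px Py; case: (HP) => _ HD _; apply: HD => //.
rewrite -scaleN1r -(rmorphN1 (@FracField.tofrac R)).
exact: Rsub_Z.
Qed.

Lemma Rsub_c (R : idomainType) (A : comAlgType {fraction R}) (P : A -> Prop) r :
  Rsubalg P -> P ((r%:F)%:A).
Proof. by case. Qed.

Lemma Rgen_sub (R : idomainType) (A : comAlgType {fraction R}) (X : A -> Prop) :
  Rsubalg (Rgen X).
Proof.
split.
- by move=> r P [Hc _ _] _.
- by move=> x y Hx Hy P HP HX; case: (HP) => _ HD _; apply: HD; [apply: Hx|apply: Hy].
- by move=> x y Hx Hy P HP HX; case: (HP) => _ _ HM; apply: HM; [apply: Hx|apply: Hy].
Qed.

Lemma Rgen_in (R : idomainType) (A : comAlgType {fraction R}) (X : A -> Prop) x :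
  X x -> Rgen X x.
Proof. by move=> Xx P _ HX; apply: HX. Qed.

Definition Gn (R : idomainType) (A : comAlgType {fraction R}) (pi : R) (e : A -> {fraction R}) (S : A -> Prop) (m : nat) : A -> Prop :=
  iter m (neron_blowup_e pi e) S.
Arguments Gn {R A}.

Lemma Gn_sub (R : idomainType) (A : comAlgType {fraction R}) (pi : R) (e : A -> {fraction R}) (S : A -> Prop) m :
  Rsubalg S -> Rsubalg (Gn pi e S m).
Proof. by case: m => [|m] //= HS; apply: Rgen_sub. Qed.

Lemma Gn_mono (R : idomainType) (A : comAlgType {fraction R}) (pi : R) (e : A -> {fraction R}) (S : A -> Prop) m k a :
  Gn pi e S m a -> Gn pi e S (m + k) a.
Proof.
elim: k => [|k IH]; first by rewrite addn0.
by move=> Ha; rewrite addnS /Gn iterS; apply: Rgen_in; left; apply: IH.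
Qed.

Lemma Gn_e (R : idomainType) (A : comAlgType {fraction R}) (pi : R) (e : A -> {fraction R}) (S : A -> Prop) m a :
  pi != 0 -> alg_hom_K e -> (forall a, S a -> exists r : R, e a = r%:F) ->
  Gn pi e S m a -> exists r : R, e a = r%:F.
Proof.
move=> pi0 He HSe; have [e0 eD eZ eC eB] := eK_lin He.
have Hsub : Rsubalg (fun a : A => exists r : R, e a = r%:F).
  split.
  - by move=> r; exists r; rewrite eC.
  - by move=> x y [r1 H1] [r2 H2]; exists (r1 + r2); rewrite eD H1 H2 tofracD.
  - by move=> x y [r1 H1] [r2 H2]; exists (r1 * r2); case: He => _ _ ->; rewrite H1 H2 tofracM.
elim: m a => [|m IH] a //=; first exact: HSe.
move=> Ha; apply: (Ha _ Hsub).
move=> x [Hx|[j _ [[r Hr] ->]]]; first exact: IH.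
exists r; rewrite eZ Hr tofracM mulrA mulVf ?mul1r //.
by rewrite tofrac_eq0.
Qed.

Lemma Gn_key (R : idomainType) (A : comAlgType {fraction R}) (pi : R) (e : A -> {fraction R}) (S : A -> Prop) m x :
  alg_hom_K e -> Gn pi e S m x -> e x = 0 ->
  forall k, Gn pi e S (m + k) (((pi%:F)^-1) ^+ k *: x).
Proof.
move=> He Hx ex; have [e0 eD eZ eC eB] := eK_lin He.
elim=> [|k IH]; first by rewrite addn0 expr0 scale1r.
rewrite addnS /Gn iterS exprS -scalerA; apply: Rgen_in; right.
exists ((pi%:F)^-1 ^+ k *: x) => //; split => //.
by exists 0; rewrite eZ ex mulr0 mulr0 tofrac0.
Qed.

Unset Implicit Arguments.
Theorem corollary2p23
  (R : idomainType) (pi : R) (Hpi : is_uniformizer pi)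
  (A A2 A3 : comAlgType {fraction R})
  (p1 p2 : A -> A2) (q1 q2 q3 : A -> A3)
  (D : A -> A2) (e : A -> {fraction R}) (s : A -> A)
  (H2 : is_tensor2 p1 p2) (H3 : is_tensor3 q1 q2 q3)
  (Hhopf : is_hopf p1 p2 q1 q2 q3 D e s)
  (S : A -> Prop) (HS : flat_group_scheme p1 p2 D e s S) :
  (forall n : nat, trivial_mod pi (auto_blowup pi e S) n) /\
  (forall S' : A -> Prop, flat_group_scheme p1 p2 D e s S' ->
     (forall a, S a -> S' a) ->
     (forall n : nat, trivial_mod pi S' n) ->
     forall a, S' a <-> auto_blowup pi e S a).
Proof.
case: Hpi => pi0 _ Hfac.
case: Hhopf => [[_ He]] _ _ _ _.
have [e0 eD eZ eC eB] := eK_lin He.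
case: HS => HSs HSspan _ HSe _.
have pi0F : pi%:F != 0 by rewrite tofrac_eq0.
have GE := fun m a => @Gn_e R A pi e S m a pi0 He HSe.
split.
- move=> n; split.
  + move=> a [m Ha]; have [r Hr] := GE _ _ Ha.
    exists r; set x := a - _.
    have Gx : Gn pi e S m x by apply: Rsub_B => //; [apply: Gn_sub|apply: Rsub_c; apply: Gn_sub].
    have ex : e x = 0 by rewrite eB Hr eC subrr.
    exists ((pi%:F)^-1 ^+ n.+1 *: x); first by exists (m + n.+1); apply: Gn_key.
    by rewrite scalerA tofracXn -exprMn mulfV // expr1n scale1r.
  + move=> r [t [m Ht] Hr].
    have [w Hw] := GE _ _ Ht.
    have := congr1 e Hr; rewrite eC eZ Hw -tofracM => /eqP; rewrite tofrac_eq => /eqP ->.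
    by exists w; rewrite mulrC.
- move=> S' HS' Sub Triv a; case: HS' => HS's _ _ HS'e _; split.
  + move=> Ha; have [t Ht] := HS'e a Ha.
    have [r [r0 Hra]] := HSspan a.
    have [u [k [Hu Hr]]] := Hfac r r0.
    set a0 := a - (t%:F)%:A.
    have Sa0 : S ((pi ^+ k)%:F *: a0).
      have -> : pi ^+ k = u^-1 * r by rewrite Hr mulKr.
      rewrite tofracM -scalerA; apply: Rsub_Z => //.
      rewrite /a0 scalerBr scalerA -tofracM; apply: Rsub_B => //.
      by rewrite -[_ *: 1]/((_)%:A); apply: Rsub_c.
    have ex : e ((pi ^+ k)%:F *: a0) = 0 by rewrite eZ /a0 eB Ht eC subrr mulr0.
    have := @Gn_key R A pi e S 0 _ He Sa0 ex k.
    rewrite scalerA tofracXn -exprMn mulVf // expr1n scale1r add0n => Gk.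
    exists k; have -> : a = a0 + (t%:F)%:A by rewrite /a0 subrK.
    case: (Gn_sub pi e k HSs) => Hc HD _; apply: HD => //.
  + case=> m; elim: m a => [|m IH] a; first exact: Sub.
    move=> Ha; apply: (Ha _ HS's).
    move=> x [Hx|[j Gj [[r Hr] ->]]]; first exact: IH.
    have Sj := IH _ Gj.
    have [c0 [s' Ss' Hc]] := (Triv 0%N).1 j Sj.
    have [w Hw] := HS'e s' Ss'.
    have Hj : j = (c0%:F)%:A + pi%:F *: s' by rewrite expr1 in Hc; rewrite -Hc addrC subrK.
    have := congr1 e Hj; rewrite eD eC eZ Hr Hw -!tofracM -tofracD => /eqP.
    rewrite tofrac_eq => /eqP Hc0.
    rewrite Hj.
    have -> : c0 = pi * (r - w) by rewrite mulrBr Hc0 addrK.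
    rewrite scalerDr scalerA tofracM mulrA mulVf // mul1r scalerA mulVf // scale1r.
    case: HS's => Hcc HD _; apply: HD => //.
Qed.
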